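(* Let $\varphi$ be an individually rational rule that is resource monotonic, strategy-proof and satisfies monotonic discoverability, and let $\mathbb{S}$ be the canonical pick-an-object mechanism that sequentializes $\varphi$. Then agents following straightforward strategies constitute the unique perfect ex-post equilibrium of the game induced by $\mathbb{S}$.
   Context: Let $A=\{a_1,\dots,a_n\}$ be a finite set of agents and $O=\{o_1,\dots,o_m\}\cup\{\emptyset\}$ a finite set of object types ($\emptyset$ the null object). Each agent $a$ has a strict preference $P_a$ over $O$ with weak version $R_a$; $\mathbb{P}$ is the set of strict preferences, $\mathcal{P}=\mathbb{P}^n$ the set of profiles; $P_{-a}$ denotes the others' preferences. An allocation is a function $\mu:A\to O$; a rule is $\varphi:\mathcal{P}\to\{\text{allocations}\}$, $\varphi_a(P)=\varphi(P)(a)$. Individually rational: $\varphi_a(P)R_a\emptyset$ always. Strategy-proof: $\varphi_a(P_a,P_{-a})R_a\varphi_a(P'_a,P_{-a})$ for all $a,P,P'_a$. Resource monotonic: for every agent $a^*$, profile $P$ and $P'_{a^*}$ with $\varphi_{a^*}(P'_{a^*},P_{-a^*})=\emptyset$, every $a\neq a^*$ has $\varphi_a(P'_{a^*},P_{-a^*})\,R_a\,\varphi_a(P)$. Monotonic discoverability: for $P$ and allocation $\mu$, $\mathcal{L}(P,\mu)$ is the set of profiles $P'$ such that for every $a$, $P'_a$ agrees with $P_a$ on $\mu(a)$ and on all objects $P_a$ ranks above $\mu(a)$ (same set above $\mu(a)$, same order). $\varphi$ satisfies monotonic discoverability if for every $\mu$ and $P$, either $\varphi(P)=\mu$ or some agent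 $a^*$ has $\varphi_{a^*}(P')\neq\mu(a^* )$ for all $P'\in\mathcal{L}(P,\mu)$. PAO mechanisms: a choice history is a finite (possibly empty) sequence $((\Omega_1,\omega_1),\dots,(\Omega_k,\omega_k))$, $\Omega_j\subseteq O$, $\omega_j\in\Omega_j$, with last choice $\omega_k$; $P_a$ is consistent with it if $\omega_jR_ao$ for all $j$ and $o\in\Omega_j$. A collective history $h^A=(h_1,\dots,h_n)$ is an $n$-tuple of choice histories ($h^{A-\emptyset}$: all empty); a profile $P$ is consistent with $h^A$ if each $P_{a_i}$ is consistent with $h_i$, and $P(h^A)$ is the set of such profiles. Define $\varphi(h^A)=\{\varphi(P):P\in P(h^A)\}$ and $\mu_i^\varphi(h^A)=\{\mu(a_i):\mu\in\varphi(h^A)\}$. A menu function $\mathbb{S}$ maps collective histories to $n$-tuples of subsets of $O$, with non-empty initial menus and, afterwards, agent $i$'s menu a subset of her last menu minus her last choice. The PAO mechanism $\mathbb{S}$: in period 1 every agent chooses from her initial menu; in each later period, given current $h^A$, if all menus in $\mathbb{S}(h^A)$ are empty the procedure stops and each agent receives her last choice; otherwise agents with non-empty menus choose an element; (menu, choice) is appended to each chooser's history. Straightforward strategy w.r.t. $P_a$: always choose the $P_a$-best element of the menu. $\mathbb{S}$ sequentializes $\varphi$ if straightforward play w.r.t. any $P$ yields $\varphi(P)$. The canonical PAO mechanism for $\varphi$ is given by: agent $i$'s menu $\mathbb{S}^i(h^A)$ is $\emptyset$ if $|\varphi(h^A)|=1$ or if agent $i$'s last choice in $h^A$ belongs to $\mu_i^\varphi(h^A)$,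 and is $\mu_i^\varphi(h^A)$ otherwise. Strategies and equilibrium: $H^A_{\mathbb{S}}$ is the set of collective histories that can arise, $H^A_{\mathbb{S}}(a)$ the set of agent $a$'s histories within them. A strategy for $a$ maps each pair (own history in $H^A_{\mathbb{S}}(a)\cup\{\emptyset\}$, menu $\Omega$) to an element of $\Omega$; a type-strategy maps preferences to strategies. $\mathcal{O}_a|_{h^A}(\sigma)$ is $a$'s assignment when $\mathbb{S}$ is run from $h^A$ with strategy profile $\sigma$. A type-strategy profile $(\Sigma_a)$ is a perfect ex-post equilibrium if for all $a$, all $h^A\in H^A_{\mathbb{S}}\cup\{h^{A-\emptyset}\}$, all strategies $\sigma'_a$ and all $P\in\mathcal{P}$: $\mathcal{O}_a|_{h^A}(\Sigma_a(P_a),(\Sigma_{a'}(P_{a'}))_{a'\neq a})\,R_a\,\mathcal{O}_a|_{h^A}(\sigma'_a,(\Sigma_{a'}(P_{a'}))_{a'\neq a})$. *)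

(* Defs.v *)
From mathcomp Require Import all_boot fingroup perm.
Set Implicit Arguments. Unset Strict Implicit. Unset Printing Implicit Defensive.

Section PAO.
Variables (n m : nat).

(* Objects: o_1..o_m are [Some i], the null object is [None]. *)
Definition obj := option 'I_m.
Definition null : obj := None.

(* A strict preference = a strict linear order on obj, encoded by a
   bijection obj -> ranks; smaller rank = better. *)
Definition pref := {perm obj}.
Definition rank (Pa : pref) (o : obj) : nat := enum_rank (Pa o).
Definition sprefers (Pa : pref) (o o' : obj) : bool := rank Pa o < rank Pa o'.
Definition wprefers (Pa : pref) (o o' : obj) : bool := rank Pa o <= rank Pa o'.

Definition profile := {ffun 'I_n -> pref}.
Definition alloc := {ffun 'I_n -> obj}.
Definition rule := profile -> alloc.

Definition upd (P : profile) (a : 'I_n) (Pa : pref) : profile :=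
  [ffun b => if b == a then Pa else P b].

Definition individually_rational (phi : rule) : Prop :=
  forall (P : profile) (a : 'I_n), wprefers (P a) (phi P a) null.

Definition strategy_proof (phi : rule) : Prop :=
  forall (P : profile) (a : 'I_n) (Pa' : pref), wprefers (P a) (phi P a) (phi (upd P a Pa') a).

Definition resource_monotonic (phi : rule) : Prop :=
  forall (astar : 'I_n) (P : profile) (Pa' : pref),
    phi (upd P astar Pa') astar = null ->
    forall a : 'I_n, a != astar -> wprefers (P a) (phi (upd P astar Pa') a) (phi P a).

Definition upper (Pa : pref) (x : obj) : {set obj} := [set o | wprefers Pa o x].

Definition in_L (P : profile) (mu : alloc) (P' : profile) : Prop :=
  forall a : 'I_n, upper (P' a) (mu a) = upper (P a) (mu a) /\
    {in upper (P a) (mu a) &, forall o o', wprefers (P' a) o o' = wprefers (P a) o o'}.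

Definition monotonic_discoverability (phi : rule) : Prop :=
  forall (mu : alloc) (P : profile),
    phi P = mu \/ exists astar : 'I_n, forall P' : profile, in_L P mu P' -> phi P' astar != mu astar.

Definition chist := seq ({set obj} * obj).
Definition colhist := {ffun 'I_n -> chist}.
Definition hempty : colhist := [ffun => [::]].

Definition last_choice (h : chist) : option obj := omap snd (ohead (rev h)).

Definition consistent (Pa : pref) (h : chist) : bool :=
  all (fun p : {set obj} * obj => [forall o in p.1, wprefers Pa p.2 o]) h.
Definition consistentP (P : profile) (hA : colhist) : bool :=
  [forall i, consistent (P i) (hA i)].

Definition phiH (phi : rule) (hA : colhist) : {set alloc} :=
  phi @: [set P | consistentP P hA].
Definition muH (phi : rule) (hA : colhist) (i : 'I_n) : {set obj} :=
  (fun mu : alloc => mu i) @: phiH phi hA.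

Definition menu_fun := colhist -> 'I_n -> {set obj}.

Definition canonical_menu (phi : rule) : menu_fun := fun hA i =>
  if (#|phiH phi hA| == 1)
     || (if last_choice (hA i) is Some o then o \in muH phi hA i else false)
  then set0 else muH phi hA i.

Definition strategy := chist -> {set obj} -> obj.
Definition valid_strategy (s : strategy) : Prop :=
  forall (h : chist) (Om : {set obj}), Om != set0 -> s h Om \in Om.

Definition stopped (S : menu_fun) (hA : colhist) : bool := [forall i, S hA i == set0].

Definition step_choice (S : menu_fun) (c : 'I_n -> obj) (hA : colhist) : colhist :=
  [ffun i => if S hA i == set0 then hA i else rcons (hA i) (S hA i, c i)].

Definition step (S : menu_fun) (sigma : 'I_n -> strategy) (hA : colhist) : colhist :=
  step_choice S (fun i => sigma i (hA i) (S hA i)) hA.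

(* Running from hA: a stopped history is a fixed point of [step]; with PAO menus
   (each choice strictly shrinks the chooser's menu) the procedure stops within
   n * #|obj| periods, so (n * #|obj|).+1 iterations reach the final history. *)
Definition run (S : menu_fun) (sigma : 'I_n -> strategy) (hA : colhist) : colhist :=
  iter (n * #|{: obj}|).+1 (step S sigma) hA.

Definition outcome (S : menu_fun) (sigma : 'I_n -> strategy) (hA : colhist) (a : 'I_n) : obj :=
  odflt null (last_choice (run S sigma hA a)).

Inductive reachable (S : menu_fun) : colhist -> Prop :=
| reach0 : reachable S hempty
| reachS (hA : colhist) (c : 'I_n -> obj) :
    reachable S hA -> ~~ stopped S hA ->
    (forall i : 'I_n, S hA i != set0 -> c i \in S hA i) ->
    reachable S (step_choice S c hA).

Definition straightforward (Pa : pref) : strategy := fun _ Om =>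
  odflt null [pick o in Om | [forall o' in Om, wprefers Pa o o']].

Definition sequentializes (S : menu_fun) (phi : rule) : Prop :=
  forall P : profile, [ffun a => outcome S (fun i => straightforward (P i)) hempty a] = phi P.

Definition type_strategy := 'I_n -> pref -> strategy.

Definition perfect_expost_eq (S : menu_fun) (Sig : type_strategy) : Prop :=
  forall (a : 'I_n) (hA : colhist), reachable S hA ->
  forall s' : strategy, valid_strategy s' ->
  forall P : profile,
    let sig := fun b => Sig b (P b) in
    wprefers (P a) (outcome S sig hA a)
                   (outcome S (fun b => if b == a then s' else sig b) hA a).

End PAO.

(* Main.v *)
Require Import Defs.
From mathcomp Require Import all_boot fingroup perm.
Set Implicit Arguments. Unset Strict Implicit. Unset Printing Implicit Defensive.


Section Prefs.
Variable m : nat.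
Local Notation obj := (obj m).
Local Notation pref := (pref m).
Local Notation nul := (null m).

Lemma rank_inj (Pa : pref) : injective (rank Pa).
Proof. move=> o o' /val_inj/enum_rank_inj; exact: perm_inj. Qed.

Lemma wpref_refl (Pa : pref) o : wprefers Pa o o.
Proof. exact: leqnn. Qed.

Lemma wpref_trans (Pa : pref) o1 o2 o3 :
  wprefers Pa o1 o2 -> wprefers Pa o2 o3 -> wprefers Pa o1 o3.
Proof. exact: leq_trans. Qed.

Lemma wpref_total (Pa : pref) o o' : wprefers Pa o o' || wprefers Pa o' o.
Proof. exact: leq_total. Qed.

Lemma wpref_antisym (Pa : pref) o o' :
  wprefers Pa o o' -> wprefers Pa o' o -> o = o'.
Proof.
rewrite /wprefers => h1 h2; apply: (@rank_inj Pa); apply/eqP; by rewrite eqn_leq h1 h2.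
Qed.

Lemma wpref_nrefl (Pa : pref) o o' : ~~ wprefers Pa o o' -> wprefers Pa o' o.
Proof. by move=> h; move: (wpref_total Pa o o'); rewrite (negbTE h). Qed.

Section Key.
Variable key : obj -> nat.
Hypothesis key_inj : injective key.

Definition kr (o : obj) : nat := #|[set o' | key o' < key o]|.

Lemma kr_lt o : kr o < #|{: obj}|.
Proof.
rewrite /kr; apply: (@leq_trans #|o |: [set o' | key o' < key o]|).
  by rewrite cardsU1 inE ltnn.
by rewrite max_card.
Qed.

Lemma kr_mono o o' : key o < key o' -> kr o < kr o'.
Proof.
move=> lt; rewrite /kr; apply: proper_card; apply/properP; split.
  by apply/subsetP=> x; rewrite !inE => /ltn_trans; apply.
by exists o; rewrite !inE ?ltnn.
Qed.

Lemma kr_le o o' : (kr o <= kr o') = (key o <= key o').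
Proof.
case: (ltngtP (key o) (key o')) => [lt|gt|eq].
- by rewrite ltnW // kr_mono.
- by apply/negbTE; rewrite -ltnNge kr_mono.
- by rewrite (key_inj eq) leqnn.
Qed.

Definition kf (o : obj) : obj := enum_val (Ordinal (kr_lt o)).

Lemma kf_inj : injective kf.
Proof.
move=> o o' /enum_val_inj [] /eqP; rewrite eqn_leq !kr_le -eqn_leq => /eqP.
exact: key_inj.
Qed.

Definition kpref : pref := perm kf_inj.

Lemma kprefE o o' : wprefers kpref o o' = (key o <= key o').
Proof. by rewrite /wprefers /rank !permE /kf !enum_valK /= kr_le. Qed.
End Key.

Definition nullkey (o : obj) : nat := if o is Some i then (nat_of_ord i).+1 else 0.
Lemma nullkey_inj : injective nullkey.
Proof. by case=> [i|] [j|] //= [] /val_inj ->. Qed.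
Definition Nnull : pref := kpref nullkey_inj.
Lemma Nnull_top o : wprefers Nnull o nul = (o == nul).
Proof. by rewrite kprefE; case: o. Qed.
Lemma Nnull_best o : wprefers Nnull nul o.
Proof. by rewrite kprefE. Qed.

Lemma sf_spec (Pa : pref) h (Om : {set obj}) : Om != set0 ->
  straightforward Pa h Om \in Om /\ forall o, o \in Om -> wprefers Pa (straightforward Pa h Om) o.
Proof.
case/set0Pn=> o0 o0in; rewrite /straightforward.
case: pickP=> [x /andP[xin /forall_inP xb]|none] /=; first by split.
case: (arg_minnP (rank Pa) o0in) => x xin xmin.
have xin' : x \in Om := xin.
have := none x; rewrite /= xin' /= => /negP; case.
by apply/forall_inP=> o oin; exact: xmin.
Qed.

Lemma sf_eq (Pa : pref) h (Om : {set obj}) x :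
  x \in Om -> (forall o, o \in Om -> wprefers Pa x o) -> straightforward Pa h Om = x.
Proof.
move=> xin xb; have ne : Om != set0 by apply/set0Pn; exists x.
case: (sf_spec Pa h ne) => sin sb; apply: (@wpref_antisym Pa); [exact: sb | exact: xb].
Qed.

Lemma sf_valid (Pa : pref) : valid_strategy (straightforward Pa).
Proof. by move=> h Om ne; case: (sf_spec Pa h ne). Qed.

Lemma sf_agree (Pa Pb : pref) h h' (Om : {set obj}) :
  {in Om &, forall o o', wprefers Pa o o' = wprefers Pb o o'} ->
  straightforward Pa h Om = straightforward Pb h' Om.
Proof.
move=> ag; case: (eqVneq Om set0) => [->|ne].
  by rewrite /straightforward; case: pickP => [x /andP[]|]; rewrite ?inE //;
     case: pickP => [y /andP[]|]; rewrite ?inE.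
case: (sf_spec Pb h' ne) => sin sb; apply: sf_eq => // o oin.
by rewrite ag //; exact: sb.
Qed.
End Prefs.


Section Chains.
Variable m : nat.
Local Notation obj := (obj m).
Local Notation pref := (pref m).
Local Notation nul := (null m).
Local Notation chist := (chist m).

Definition chain (h : chist) : seq obj := map snd h.

Fixpoint wfa (prev : seq obj) (h : chist) : Prop :=
  if h is (Om, w) :: t then
    w \in Om /\ (forall o, o \in prev -> o \notin Om) /\ wfa (rcons prev w) t
  else True.
Definition wfh (h : chist) := wfa [::] h.

Lemma chain_rcons h e : chain (rcons h e) = rcons (chain h) e.2.
Proof. by rewrite /chain map_rcons. Qed.

Lemma wfa_rcons prev h Om w :
  wfa prev (rcons h (Om, w)) <->
  wfa prev h /\ w \in Om /\ (forall o, o \in prev ++ chain h -> o \notin Om).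
Proof.
elim: h prev => [|[Om' w'] t IH] prev /=.
  by rewrite cats0; split=> [[a [b _]]|[_ [a b]]].
split.
  case=> a [b /IH [c [d e]]]; do !split=> //.
  by move=> o; rewrite -cat_rcons; apply: e.
case=> [[a [b c]] [d e]]; do !split=> //; apply/IH; do !split=> //.
by move=> o; rewrite cat_rcons; apply: e.
Qed.

Lemma wfa_uniq prev h : wfa prev h -> uniq prev -> uniq (prev ++ chain h).
Proof.
elim: h prev => [|[Om w] t IH] prev /=; first by rewrite cats0.
case=> win [dis wt] up; rewrite -cat_rcons; apply: IH => //.
rewrite rcons_uniq up andbT; apply/negP=> wp.
by move: (dis w wp); rewrite win.
Qed.

Lemma wf_uniq h : wfh h -> uniq (chain h).
Proof. by move=> w; have := wfa_uniq w; apply. Qed.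

Lemma wf_rcons h Om w : wfh (rcons h (Om, w)) <->
  wfh h /\ w \in Om /\ (forall o, o \in chain h -> o \notin Om).
Proof. exact: wfa_rcons. Qed.

Lemma wf_size h : wfh h -> size h <= #|{: obj}|.
Proof.
move=> /wf_uniq u; rewrite -(size_map snd) -(card_uniqP u).
exact: max_card.
Qed.

Definition ckey (c : seq obj) (P : pref) (o : obj) : nat :=
  if o \in c then index o c else size c + rank P o.

Lemma ckey_inj c P : injective (ckey c P).
Proof.
move=> o o'; rewrite /ckey.
case oc: (o \in c); case oc': (o' \in c) => e.
- by rewrite -(nth_index o oc) e nth_index.
- by move: (index_mem o c); rewrite oc e ltnNge leq_addr.
- by move: (index_mem o' c); rewrite oc' -e ltnNge leq_addr.
- by apply: (@rank_inj _ P); apply/eqP; rewrite -(eqn_add2l (size c)) e.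
Qed.

Definition modif (P : pref) (h : chist) : pref := kpref (@ckey_inj (chain h) P).

Lemma modifE P h o o' :
  wprefers (modif P h) o o' = (ckey (chain h) P o <= ckey (chain h) P o').
Proof. exact: kprefE. Qed.

Lemma modif_out P h o o' : o \notin chain h -> o' \notin chain h ->
  wprefers (modif P h) o o' = wprefers P o o'.
Proof.
by move=> /negbTE a /negbTE b; rewrite modifE /ckey a b leq_add2l.
Qed.

Lemma modif_in_out P h o o' : o \in chain h -> o' \notin chain h ->
  wprefers (modif P h) o o'.
Proof.
move=> a /negbTE b; rewrite modifE /ckey a b.
by apply: leq_trans (leq_addr _ _); apply: ltnW; rewrite index_mem.
Qed.

Lemma modif_out_in P h o o' : o \notin chain h -> o' \in chain h ->
  ~~ wprefers (modif P h) o o'.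
Proof.
move=> /negbTE a b; rewrite modifE /ckey a b -ltnNge.
by apply: leq_trans (leq_addr _ _); rewrite index_mem.
Qed.

Lemma modif_in P h o o' : o \in chain h -> o' \in chain h ->
  wprefers (modif P h) o o' = (index o (chain h) <= index o' (chain h)).
Proof. by move=> a b; rewrite modifE /ckey a b. Qed.

Lemma modif_null h o : wprefers (modif (Nnull m) h) o nul -> o \in chain h \/ o = nul.
Proof.
case oc: (o \in chain h); first by left.
case nc: (nul \in chain h).
  by move/negbT: oc => oc; rewrite (negbTE (modif_out_in _ oc nc)).
by move/negbT: oc => oc; move/negbT: nc => nc; rewrite modif_out // Nnull_top => /eqP; right.
Qed.

Lemma wfa_consistent_key prev h P :
  wfa prev h ->
  forall e, e \in h -> forall o, o \in e.1 -> ckey (prev ++ chain h) P e.2 <= ckey (prev ++ chain h) P o.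
Proof.
elim: h prev => [|[Om w] t IH] prev //=.
case=> win [dis wt] e; rewrite in_cons => /orP[/eqP->|et] o oin.
  have wp : w \notin prev by apply/negP=> /dis; rewrite win.
  have op : o \notin prev by apply/negP=> /dis; rewrite oin.
  rewrite /ckey !mem_cat in_cons eqxx orbT /= !index_cat (negbTE wp) (negbTE op) /=.
  rewrite eqxx addn0.
  case: ifP => _; first by rewrite leq_addr.
  by rewrite size_cat -addnA leq_addr.
by have := IH _ wt e et o oin; rewrite -cat_rcons.
Qed.

Lemma modif_cons P h : wfh h -> consistent (modif P h) h.
Proof.
move=> w; apply/allP=> e eh /=; apply/forall_inP=> o oin.
by rewrite modifE; exact: (wfa_consistent_key P w eh oin).
Qed.

Definition lastc (h : chist) : obj := last nul (chain h).

Definition chaintop (Q : pref) (g : chist) : Prop :=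
  (forall o, wprefers Q o (lastc g) = (o \in chain g)) /\
  {in chain g &, forall o o', wprefers Q o o' = (index o (chain g) <= index o' (chain g))}.

Lemma modif_chaintop P g : wfh g -> g != [::] -> chaintop (modif P g) g.
Proof.
move=> w gne; split; last by move=> o o' a b; rewrite modif_in.
have u := wf_uniq w.
have lin : lastc g \in chain g.
  rewrite /lastc; case E: (chain g) => [|y s]; last by rewrite /= mem_last.
  by move: gne; rewrite -size_eq0 -(size_map snd) -/(chain g) E.
have li : index (lastc g) (chain g) = (size (chain g)).-1.
  have gen : forall s : seq obj, uniq s -> last nul s \in s -> index (last nul s) s = (size s).-1.
    move=> s; case/lastP: s => [|s x] //.
    rewrite last_rcons rcons_uniq => /andP[xs _] _.
    by rewrite -cats1 index_cat (negbTE xs) /= eqxx addn0 size_cat /= addn1.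
  exact: gen.
have sz : 0 < size (chain g) by move: lin; case: (chain g).
move=> o; rewrite modifE /ckey lin li; case oc: (o \in chain g).
  by rewrite -ltnS prednK // index_mem oc.
apply/negbTE; rewrite -ltnNge; apply: leq_trans (leq_addr _ _).
by rewrite prednK.
Qed.

Lemma consistent_rcons (Pa : pref) h e :
  consistent Pa (rcons h e) = [forall o in e.1, wprefers Pa e.2 o] && consistent Pa h.
Proof. by rewrite /consistent all_rcons. Qed.

End Chains.


Section Game.
Variables (n m : nat) (phi : rule n m).
Local Notation obj := (obj m).
Local Notation pref := (pref m).
Local Notation nul := (null m).
Local Notation chist := (chist m).
Local Notation colhist := (colhist n m).
Local Notation profile := (profile n m).
Local Notation S := (canonical_menu phi).
Local Notation hemp := (hempty n m).

Definition lastE (h : chist) := last (set0, nul) h.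

Lemma last_choiceE (h : chist) :
  last_choice h = if h is [::] then None else Some (lastc h).
Proof.
case/lastP: h => [|h e] //; rewrite /last_choice rev_rcons /= /lastc chain_rcons last_rcons.
by case: h.
Qed.

Lemma menuE (h : colhist) i : S h i != set0 ->
  [/\ S h i = muH phi h i, #|phiH phi h| != 1 &
      (h i != [::] -> lastc (h i) \notin muH phi h i)].
Proof.
rewrite /canonical_menu; case: ifP; rewrite ?eqxx //.
move/negbT; rewrite negb_or => /andP[c1 c2] _; split=> //.
by move: c2; rewrite last_choiceE; case: (h i).
Qed.

Lemma stepE (c : 'I_n -> obj) (h : colhist) i :
  step_choice S c h i = if S h i == set0 then h i else rcons (h i) (S h i, c i).
Proof. by rewrite ffunE. Qed.

Lemma consistentP_step (P : profile) c h :
  consistentP P (step_choice S c h) -> consistentP P h.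
Proof.
move/forallP=> H; apply/forallP=> i; move: (H i); rewrite stepE.
by case: ifP => // _; rewrite consistent_rcons => /andP[].
Qed.

Lemma phiH_step c h : phiH phi (step_choice S c h) \subset phiH phi h.
Proof.
apply/subsetP=> mu /imsetP[P]; rewrite inE => PC ->; apply/imsetP; exists P => //.
by rewrite inE; apply: consistentP_step PC.
Qed.

Lemma muH_step c h i : muH phi (step_choice S c h) i \subset muH phi h i.
Proof. by apply: imsetS; apply: phiH_step. Qed.

Lemma muH_phi (P : profile) h i : consistentP P h -> phi P i \in muH phi h i.
Proof. by move=> c; apply/imsetP; exists (phi P) => //; apply/imsetP; exists P; rewrite ?inE. Qed.

Lemma muH_witness h i o : o \in muH phi h i -> exists2 P : profile, consistentP P h & phi P i = o.
Proof. by case/imsetP=> mu /imsetP[P]; rewrite inE => c -> ->; exists P. Qed.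

Definition Inv (h : colhist) : Prop :=
  forall i, wfh (h i) /\ (h i != [::] -> muH phi h i \subset (lastE (h i)).1).

Lemma muH_chain h i o : Inv h -> o \in muH phi h i -> o \in chain (h i) -> o = lastc (h i).
Proof.
move=> /(_ i) [w sub]; case/lastP E: (h i) w sub => [|h' [Om x]] //.
move=> /wf_rcons [_ [_ dis]] sub oin; rewrite chain_rcons mem_rcons in_cons.
case/orP=> [/eqP->|oc]; first by rewrite /lastc chain_rcons last_rcons.
have ne : rcons h' (Om, x) != [::] by rewrite -size_eq0 size_rcons.
have : o \in Om by move: (sub ne) => /subsetP; rewrite /lastE last_rcons; apply.
by rewrite (negbTE (dis o oc)).
Qed.

Lemma menu_disj h i o : Inv h -> S h i != set0 -> o \in S h i -> o \notin chain (h i).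
Proof.
move=> I ne; case: (menuE ne) => -> _ lc oin; apply/negP=> oc.
have e := muH_chain I oin oc.
have hne : h i != [::] by move: oc; case: (h i).
by move: (lc hne); rewrite -e oin.
Qed.

Lemma Inv_step h c : Inv h -> (forall i, S h i != set0 -> c i \in S h i) ->
  Inv (step_choice S c h).
Proof.
move=> I cv i; case: (I i) => w sub; rewrite stepE; case: ifP => [e|/negbT ne].
  split=> // hne; apply: subset_trans (muH_step _ _ _) (sub hne).
split.
  apply/wf_rcons; split=> //; split; first exact: cv.
  by move=> o oc; apply/negP => oin; move: (menu_disj I ne oin); rewrite oc.
move=> _; rewrite /lastE last_rcons /=; case: (menuE ne) => -> _ _.
apply: muH_step.
Qed.

Lemma reach_Inv h : reachable S h -> Inv h.
Proof.
elim=> [|h' c _ IH _ cv]; last exact: Inv_step.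
by move=> i; rewrite ffunE.
Qed.

Lemma stopped_step h c : stopped S h -> step_choice S c h = h.
Proof. by move/forallP=> st; apply/ffunP=> i; rewrite stepE (st i). Qed.

Definition validS (sig : 'I_n -> strategy m) := forall i, valid_strategy (sig i).

Lemma reach_step h sig : reachable S h -> validS sig -> reachable S (step S sig h).
Proof.
move=> r v; case st: (stopped S h); first by rewrite /step stopped_step.
by apply: reachS => //; [rewrite st | move=> i ne; apply: v].
Qed.

Lemma reach_iter h sig k : reachable S h -> validS sig -> reachable S (iter k (step S sig) h).
Proof. by move=> r v; elim: k => //= k IH; apply: reach_step. Qed.

Definition htotal (h : colhist) := \sum_(i < n) size (h i).

Lemma htotal_le h : Inv h -> htotal h <= n * #|{: obj}|.
Proof.
move=> I; rewrite /htotal; apply: (@leq_trans (\sum_(i < n) #|{: obj}|)).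
  by apply: leq_sum => i _; apply: wf_size; case: (I i).
by rewrite sum_nat_const card_ord.
Qed.

Lemma htotal_step h c : ~~ stopped S h -> htotal h < htotal (step_choice S c h).
Proof.
case/forallPn=> i ne; rewrite /htotal (bigD1 i) //= [X in _ < X](bigD1 i) //=.
rewrite -addSn leq_add //; first by rewrite stepE (negbTE ne) size_rcons.
by apply: leq_sum => j _; rewrite stepE; case: ifP => // _; rewrite size_rcons.
Qed.

Lemma iter_fix T (f : T -> T) x k : f x = x -> iter k f x = x.
Proof. by move=> e; elim: k => //= k ->. Qed.

Lemma iter_stopped sig : validS sig -> forall k h, reachable S h ->
  n * #|{: obj}| < k + htotal h -> stopped S (iter k (step S sig) h).
Proof.
move=> v; elim=> [|k IH] h r lt.
  by move: (htotal_le (reach_Inv r)); rewrite leqNgt lt.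
case st: (stopped S h).
  by rewrite iter_fix // /step stopped_step.
rewrite iterSr; apply: IH; first exact: reach_step.
apply: (leq_trans lt); rewrite addSn -addnS leq_add2l; exact: htotal_step (negbT st).
Qed.

Lemma run_stopped sig h : validS sig -> reachable S h -> stopped S (run S sig h).
Proof. by move=> v r; apply: iter_stopped => //; rewrite ltnS leq_addr. Qed.

Lemma iter_stop_more sig h k l : stopped S (iter k (step S sig) h) ->
  iter (l + k) (step S sig) h = iter k (step S sig) h.
Proof. by move=> st; rewrite iterD iter_fix // /step stopped_step. Qed.

Lemma run_step sig h : validS sig -> reachable S h -> run S sig (step S sig h) = run S sig h.
Proof.
move=> v r; have st := run_stopped v r.
transitivity (iter (1 + (n * #|{: obj}|).+1) (step S sig) h); first by rewrite /run -iterSr add1n.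
by rewrite iter_stop_more.
Qed.

Lemma run_of_stopped sig h : stopped S h -> run S sig h = h.
Proof. by move=> st; rewrite /run iter_fix // /step stopped_step. Qed.

Definition sfP (Q : profile) : 'I_n -> strategy m := fun i => straightforward (Q i).

Lemma sfP_valid Q : validS (sfP Q).
Proof. by move=> i; exact: sf_valid. Qed.

Lemma path_lemma h (Q : profile) : reachable S h -> consistentP Q h ->
  exists k, h = iter k (step S (sfP Q)) hemp.
Proof.
elim=> [|h' c r IH nst cv] C; first by exists 0.
case: (IH (consistentP_step C)) => k e; exists k.+1; rewrite iterS -e.
apply/ffunP=> i; rewrite !ffunE; case: ifP => // /negbT ne; congr rcons; congr pair.
move/forallP: C => /(_ i); rewrite stepE (negbTE ne) consistent_rcons => /andP[/forall_inP b _].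
by rewrite /sfP; symmetry; apply: sf_eq => //; apply: cv.
Qed.

Hypothesis seqz : sequentializes S phi.

Lemma FH h (Q : profile) : reachable S h -> stopped S h -> consistentP Q h ->
  forall a, odflt nul (last_choice (h a)) = phi Q a.
Proof.
move=> r st C a; case: (path_lemma r C) => k e.
have r0 : reachable S hemp by constructor.
have st0 := run_stopped (sfP_valid Q) r0.
have stk : stopped S (iter k (step S (sfP Q)) hemp) by rewrite -e.
have eh : run S (sfP Q) hemp = h.
  rewrite e /run -(iter_stop_more (n * #|{: obj}|).+1 stk).
  by rewrite addnC iter_stop_more.
move: (seqz Q) => /ffunP /(_ a); rewrite ffunE /outcome eh => <-.
by [].
Qed.

End Game.


Section Game2.
Variables (n m : nat) (phi : rule n m).
Local Notation obj := (obj m).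
Local Notation pref := (pref m).
Local Notation nul := (null m).
Local Notation chist := (chist m).
Local Notation colhist := (colhist n m).
Local Notation profile := (profile n m).
Local Notation S := (canonical_menu phi).
Local Notation hemp := (hempty n m).
Local Notation N0 := (n * #|{: obj}|).

Lemma nonchooser h j : ~~ stopped S h -> S h j == set0 -> h j != [::].
Proof.
case/forallPn=> i ne; case: (menuE ne) => e1 e2 _.
rewrite /canonical_menu (negbTE e2) /=.
case E: (h j) => [|x s] //=; rewrite /last_choice /= => e.
have : muH phi h j != set0.
  rewrite /muH imset_eq0 -(imset_eq0 (fun mu : alloc n m => mu i)).
  by rewrite -/(muH phi h i) -e1.
by rewrite e.
Qed.

Lemma stepS_E (sig : 'I_n -> strategy m) h i :
  step S sig h i = if S h i == set0 then h i else rcons (h i) (S h i, sig i (h i) (S h i)).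
Proof. by rewrite /step stepE. Qed.

Lemma cons_iter sig h j (P Q : pref) : reachable S h -> validS sig ->
  (forall h' Om, sig j h' Om = straightforward P h' Om) ->
  consistent Q (h j) ->
  (forall o o', o \notin chain (h j) -> o' \notin chain (h j) -> wprefers Q o o' = wprefers P o o') ->
  forall k, consistent Q (iter k (step S sig) h j).
Proof.
move=> r v sj C ag k.
suff : consistent Q (iter k (step S sig) h j) /\ {subset chain (h j) <= chain (iter k (step S sig) h j)}.
  by case.
elim: k => [|k [IHc IHs]]; first by split.
rewrite iterS.
have rk := reach_iter k r v; have I := reach_Inv rk.
rewrite stepS_E; case: ifP => [_|/negbT ne]; first by [].
rewrite consistent_rcons IHc andbT chain_rcons; split; last first.
  by move=> o oh; rewrite mem_rcons in_cons IHs ?orbT.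
set hk := iter k (step S sig) h.
rewrite sj; case: (sf_spec P (hk j) ne) => xin xb.
apply/forall_inP=> o oin /=.
have nco : o \notin chain (h j).
  by apply/negP=> /IHs; apply/negP; exact: menu_disj I ne oin.
have ncx : straightforward P (hk j) (S hk j) \notin chain (h j).
  by apply/negP=> /IHs; apply/negP; exact: menu_disj I ne xin.
by rewrite ag //; apply: xb.
Qed.

Lemma consistentP_iter (P : profile) sig h k :
  consistentP P (iter k (step S sig) h) -> consistentP P h.
Proof. by elim: k => //= k IH /consistentP_step /IH. Qed.

Lemma reach_ind (Pr : colhist -> Prop) :
  (forall h, reachable S h -> (forall h', reachable S h' -> htotal h < htotal h' -> Pr h') -> Pr h) ->
  forall h, reachable S h -> Pr h.
Proof.
move=> H.
suff: forall k h, reachable S h -> N0 - htotal h <= k -> Pr h.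
  by move=> G h r; apply: (G N0) => //; rewrite leq_subr.
elim=> [|k IH] h r le; apply: H => // h' r' lt.
  have := htotal_le (reach_Inv r'); rewrite leqNgt; move: le; rewrite leqn0 subn_eq0 => le.
  by rewrite (leq_ltn_trans le lt).
apply: IH => //.
have le' := htotal_le (reach_Inv r').
rewrite -ltnS; apply: leq_trans le.
by rewrite ltn_sub2l // (leq_trans lt le').
Qed.

Hypothesis SP : strategy_proof phi.
Hypothesis seqz : sequentializes S phi.

Lemma step_dev (sig : 'I_n -> strategy m) a s' h : S h a == set0 ->
  step S (fun b => if b == a then s' else sig b) h = step S sig h.
Proof.
move=> e; apply/ffunP=> i; rewrite !stepS_E.
case: (eqVneq i a) => [->|ia]; first by rewrite e.
by [].
Qed.

Theorem G1 : perfect_expost_eq S (fun (_ : 'I_n) (Pa : pref) => straightforward Pa).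
Proof.
move=> a hA r s' vs P /=.
change (fun b => straightforward (P b)) with (sfP P).
set sig := sfP P.
set dev := fun b => if b == a then s' else sig b.
have vsig : validS sig by exact: sfP_valid.
have vdev : validS dev by move=> b; rewrite /dev; case: ifP => // _; exact: vsig.
move: hA r; apply: reach_ind => h r IH.
case st: (stopped S h).
  by rewrite /outcome !run_of_stopped // wpref_refl.
case: (eqVneq (S h a) set0) => [e|ne].
  have e1 := step_dev sig s' (introT eqP e).
  have r1 := reach_step r vsig.
  rewrite /outcome -(run_step vsig r) -(run_step vdev r) /dev e1.
  apply: IH => //; exact: htotal_step (negbT st).
have I := reach_Inv r.
pose Q : profile := [ffun i => modif (P i) (h i)].
have QC : consistentP Q h.
  by apply/forallP=> i; rewrite ffunE; apply: modif_cons; case: (I i).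
have rs := reach_iter (N0.+1) r vsig.
have sts := run_stopped vsig r.
have QCs : consistentP Q (run S sig h).
  apply/forallP=> j; rewrite /run ffunE; apply: (cons_iter (P := P j)) => //.
  - by case: (I j) => w _; exact: modif_cons.
  - by move=> o o' a1 a2; rewrite modif_out.
have e1 : outcome S sig h a = phi Q a := FH seqz rs sts QCs a.
have rd := reach_iter (N0.+1) r vdev.
have std := run_stopped vdev r.
pose D := upd Q a (modif (P a) (run S dev h a)).
have DC : consistentP D (run S dev h).
  apply/forallP=> j; rewrite /D /upd ffunE; case: (eqVneq j a) => [->|ja].
    by apply: modif_cons; case: (reach_Inv rd a).
  rewrite /run ffunE; apply: (cons_iter (P := P j)) => //.
  - by move=> h' Om; rewrite /dev (negbTE ja).
  - by case: (I j) => w _; exact: modif_cons.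
  - by move=> o o' a1 a2; rewrite modif_out.
have e2 : outcome S dev h a = phi D a := FH seqz rd std DC a.
rewrite e1 e2.
have sp := SP Q a (modif (P a) (run S dev h a)).
have m1 : phi Q a \in S h a by case: (menuE ne) => -> _ _; exact: muH_phi.
have m2 : phi D a \in S h a.
  by case: (menuE ne) => -> _ _; apply: muH_phi; apply: consistentP_iter DC.
move: sp; rewrite -/D ffunE modif_out //; exact: menu_disj I ne _.
Qed.

End Game2.


Section Uniq.
Variables (n m : nat) (phi : rule n m).
Local Notation obj := (obj m).
Local Notation pref := (pref m).
Local Notation nul := (null m).
Local Notation chist := (chist m).
Local Notation colhist := (colhist n m).
Local Notation profile := (profile n m).
Local Notation S := (canonical_menu phi).
Local Notation hemp := (hempty n m).
Local Notation N0 := (n * #|{: obj}|).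
Local Notation NN := (Nnull m).

Hypothesis IR : individually_rational phi.
Hypothesis RM : resource_monotonic phi.
Hypothesis SP : strategy_proof phi.
Hypothesis MD : monotonic_discoverability phi.
Hypothesis seqz : sequentializes S phi.

Lemma updE (P : profile) j Pa i : upd P j Pa i = if i == j then Pa else P i.
Proof. by rewrite ffunE. Qed.

Lemma upd_upd_self (P : profile) j Pa : upd (upd P j Pa) j (P j) = P.
Proof. by apply/ffunP=> i; rewrite !updE; case: eqP => // ->. Qed.

Lemma upd_self (P : profile) j : upd P j (P j) = P.
Proof. by apply/ffunP=> i; rewrite !updE; case: eqP => // ->. Qed.

Lemma MDL (X Y : profile) : in_L Y (phi X) X -> phi Y = phi X.
Proof.
move=> L; case: (MD (phi X) Y) => [->//|[as0 H]].
by move: (H X L); rewrite eqxx.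
Qed.

Lemma RM2 (X : profile) j Yj :
  phi (upd X j Yj) j = nul -> phi X j = nul -> phi (upd X j Yj) = phi X.
Proof.
move=> e1 e2; apply/ffunP=> i; case: (eqVneq i j) => [->|ij]; first by rewrite e1 e2.
have h1 := @RM j X Yj e1 i ij.
have e2' : phi (upd (upd X j Yj) j (X j)) j = nul by rewrite upd_upd_self.
have h2 := @RM j (upd X j Yj) (X j) e2' i ij.
move: h2; rewrite upd_upd_self updE (negbTE ij) => h2.
exact: wpref_antisym h1 h2.
Qed.

Lemma null_in_menu h j : reachable S h -> S h j != set0 -> nul \in S h j.
Proof.
move=> r ne; have I := reach_Inv r; case: (menuE ne) => e _ _.
case/set0Pn: (ne) => o; rewrite e => /muH_witness [Q QC _].
pose Q' := upd Q j (modif NN (h j)).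
have QC' : consistentP Q' h.
  apply/forallP=> i; rewrite updE; case: eqP => [->|_]; last exact: (forallP QC i).
  by apply: modif_cons; case: (I j).
have mu := muH_phi phi j QC'; rewrite -e in mu.
have := IR Q' j; rewrite updE eqxx => /modif_null [oc|e0].
  by move: (menu_disj I ne mu); rewrite oc.
by rewrite -e -e0.
Qed.

Lemma IRR h (X X' : profile) : reachable S h -> consistentP X h -> consistentP X' h ->
  (forall j o o', o \notin chain (h j) -> o' \notin chain (h j) ->
     wprefers (X' j) o o' = wprefers (X j) o o') -> phi X' = phi X.
Proof.
move=> r C C' ag.
have rs := reach_iter (N0.+1) r (sfP_valid X).
have sts := run_stopped (sfP_valid X) r.
have Cs : consistentP X (run S (sfP X) h).
  apply/forallP=> j; apply: (cons_iter (P := X j)) => //; first exact: sfP_valid.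
  exact: (forallP C j).
have Cs' : consistentP X' (run S (sfP X) h).
  apply/forallP=> j; apply: (cons_iter (P := X j)) => //; first exact: sfP_valid.
    exact: (forallP C' j).
  exact: ag.
apply/ffunP=> a; by rewrite -(FH seqz rs sts Cs a) -(FH seqz rs sts Cs' a).
Qed.

Definition InvK h a z (F X : profile) :=
  [/\ consistentP X h, X a = F a, phi X a = z &
      forall j, j != a -> S h j == set0 -> chaintop (X j) (h j)].

Lemma K h a z (F : profile) : reachable S h -> S h a != set0 -> z \in S h a ->
  consistentP F h ->
  (forall o, o \notin chain (h a) -> wprefers (F a) z o) ->
  (forall j, j != a -> forall o, wprefers (F j) o nul -> o \in chain (h j) \/ o = nul) ->
  (forall j, j != a -> S h j == set0 -> chaintop (F j) (h j)) ->
  phi F a = z.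
Proof.
move=> r ne zin FC Ka Kb Kc.
have I := reach_Inv r.
have nst : ~~ stopped S h by apply/forallPn; exists a.
have mua : S h a = muH phi h a by case: (menuE ne).
have outa : forall X : profile, consistentP X h -> phi X a \notin chain (h a).
  by move=> X XC; apply: (menu_disj I ne); rewrite mua; exact: muH_phi.
have fix_a : forall X : profile, consistentP X h -> X a = F a ->
   wprefers (F a) (phi X a) z -> phi X a = z.
  move=> X XC Xa w; apply: (wpref_antisym w); exact: Ka (outa X XC).
move: zin; rewrite mua => /muH_witness [Q QC Qa].
pose Q1 : profile := [ffun i => modif (Q i) (h i)].
have Q1C : consistentP Q1 h.
  by apply/forallP=> i; rewrite ffunE; apply: modif_cons; case: (I i).
have e1 : phi Q1 = phi Q.
  apply: (IRR r QC Q1C) => j o o' a1 a2; rewrite ffunE modif_out //.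
pose Q2 := upd Q1 a (F a).
have Q2C : consistentP Q2 h.
  apply/forallP=> i; rewrite updE; case: eqP => [->|_]; last exact: (forallP Q1C i).
  exact: (forallP FC a).
have inv0 : InvK h a z F Q2.
  split=> //; first by rewrite updE eqxx.
    apply: fix_a => //; first by rewrite updE eqxx.
    by have := SP Q2 a (Q1 a); rewrite /Q2 upd_upd_self updE eqxx e1 Qa.
  move=> j ja js; rewrite updE (negbTE ja) ffunE; apply: modif_chaintop.
    by case: (I j).
  exact: nonchooser nst js.
have step : forall X j, InvK h a z F X -> j != a -> InvK h a z F (upd X j (F j)).
  move=> X j [XC Xa Xz Xt] ja.
  set Y := upd X j (F j).
  have YC : consistentP Y h.
    apply/forallP=> i; rewrite updE; case: eqP => [->|_]; last exact: (forallP XC i).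
    exact: (forallP FC j).
  have Ya : Y a = F a by rewrite updE eq_sym (negbTE ja).
  have Yt : forall i, i != a -> S h i == set0 -> chaintop (Y i) (h i).
    move=> i ia iS; rewrite updE; case: eqP => [eij|_]; last exact: Xt.
    by rewrite eij in ia iS *; exact: Kc.
  split=> //.
  have irY := IR Y j; rewrite updE eqxx in irY.
  have mY := muH_phi phi j YC.
  case: (Kb j ja _ irY) => [oc|onul].
    have el := muH_chain I mY oc.
    have js : S h j == set0.
      apply/negPn/negP=> jne; case: (menuE jne) => ej _ _.
      by move: (menu_disj I jne (o := phi Y j)); rewrite ej mY oc => /(_ isT).
    have [tX1 tX2] := Xt j ja js.
    have [tF1 tF2] := Kc j ja js.
    have sp := SP X j (F j); rewrite -/Y el tX1 in sp.
    have eX : phi X j = lastc (h j) := muH_chain I (muH_phi phi j XC) sp.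
    have L : in_L Y (phi X) X.
      move=> i; rewrite updE; case: eqP => [->|_]; last by split.
      rewrite eX; split.
        by apply/setP=> o; rewrite !inE tX1 tF1.
      by move=> o o'; rewrite /upper !inE !tF1 => o1 o2; rewrite tX2 ?tF2.
    by rewrite (MDL L).
  have rm := @RM j X (F j) onul a; rewrite -/Y Xa Xz in rm.
  by apply: fix_a => //; apply: rm; rewrite eq_sym.
pose G (s : seq 'I_n) : profile := [ffun i => if i \in s then F i else Q2 i].
have invs : forall s, InvK h a z F (G s).
  elim=> [|j s IH].
    by have -> : G [::] = Q2 by apply/ffunP=> i; rewrite ffunE.
  case: (eqVneq j a) => [ja|ja].
    have -> : G (j :: s) = G s.
      apply/ffunP=> i; rewrite !ffunE in_cons; case: (eqVneq i j) => [->|] //=.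
      by rewrite ja; case: ifP => // _; rewrite eqxx.
    exact: IH.
  case: (boolP (j \in s)) => js.
    have -> : G (j :: s) = G s.
      by apply/ffunP=> i; rewrite !ffunE in_cons; case: (eqVneq i j) => [->|]; rewrite ?js.
    exact: IH.
  have -> : G (j :: s) = upd (G s) j (F j).
    by apply/ffunP=> i; rewrite updE !ffunE in_cons; case: (eqVneq i j) => //= ->.
  exact: step.
have -> : F = G (enum 'I_n) by apply/ffunP=> i; rewrite ffunE mem_enum.
by case: (invs (enum 'I_n)).
Qed.

Lemma KA h a (P : profile) (c : 'I_n -> obj) : reachable S h -> S h a != set0 ->
  c a \in S h a -> (forall j, j != a -> P j = NN) ->
  (forall j, j != a -> S h j != set0 -> c j = nul) ->
  phi [ffun j => modif (P j) (step_choice S c h j)] a = c a.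
Proof.
move=> r ne ca PN cn.
have I := reach_Inv r.
have nst : ~~ stopped S h by apply/forallPn; exists a.
have cv : forall i, S h i != set0 -> c i \in S h i.
  move=> i ine; case: (eqVneq i a) => [->//|ia].
  by rewrite cn //; exact: null_in_menu.
have I1 := Inv_step I cv.
apply: (K r ne ca).
- apply: (@consistentP_step n m phi _ c h); apply/forallP=> i; rewrite ffunE.
  by apply: modif_cons; case: (I1 i).
- move=> o oc; rewrite ffunE stepE (negbTE ne).
  case: (eqVneq o (c a)) => [->|oca]; first exact: wpref_refl.
  apply: modif_in_out; first by rewrite chain_rcons mem_rcons in_cons eqxx.
  by rewrite chain_rcons mem_rcons in_cons negb_or oca oc.
- move=> j ja o; rewrite ffunE (PN j ja) => /modif_null [|->]; last by right.
  rewrite stepE; case: ifP => [_|/negbT jne]; first by left.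
  rewrite chain_rcons mem_rcons in_cons /= (cn j ja jne) => /orP[/eqP->|]; by [right|left].
- move=> j ja js; rewrite ffunE (PN j ja) stepE js; apply: modif_chaintop.
    by case: (I j).
  exact: nonchooser nst js.
Qed.

End Uniq.


Section Uniq2.
Variables (n m : nat) (phi : rule n m).
Local Notation obj := (obj m).
Local Notation pref := (pref m).
Local Notation nul := (null m).
Local Notation chist := (chist m).
Local Notation colhist := (colhist n m).
Local Notation profile := (profile n m).
Local Notation S := (canonical_menu phi).
Local Notation N0 := (n * #|{: obj}|).
Local Notation NN := (Nnull m).

Hypothesis IR : individually_rational phi.
Hypothesis RM : resource_monotonic phi.
Hypothesis SP : strategy_proof phi.
Hypothesis MD : monotonic_discoverability phi.
Hypothesis seqz : sequentializes S phi.

Variable Sig : type_strategy n m.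
Hypothesis vSig : forall a Pa, valid_strategy (Sig a Pa).
Hypothesis eqS : perfect_expost_eq S Sig.

Definition U (h : colhist) := forall i p, S h i != set0 ->
  Sig i p (h i) (S h i) = straightforward p (h i) (S h i).

Lemma htotal_le_step c h : htotal h <= htotal (step_choice S c h).
Proof.
by apply: leq_sum => j _; rewrite stepE; case: ifP => // _; rewrite size_rcons.
Qed.

Lemma htotal_iter sig h k : htotal h <= htotal (iter k (step S sig) h).
Proof. by elim: k => //= k IH; apply: leq_trans IH (htotal_le_step _ _). Qed.

Lemma CONT h : reachable S h ->
  (forall h', reachable S h' -> htotal h < htotal h' -> U h') -> ~~ stopped S h ->
  forall (P : profile) (sig : 'I_n -> strategy m), validS sig ->
  (forall i, (forall h0 Om, sig i h0 Om = Sig i (P i) h0 Om) \/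
             (forall h0 Om, sig i h0 Om = straightforward (P i) h0 Om)) ->
  forall a, outcome S sig h a = phi [ffun i => modif (P i) (step S sig h i)] a.
Proof.
move=> r IH nst P sig vs hs a.
set h1 := step S sig h.
have r1 : reachable S h1 := reach_step r vs.
have lt : htotal h < htotal h1 by exact: htotal_step.
have A : forall k, iter k (step S sig) h1 = iter k (step S (sfP P)) h1.
  elim=> //= k ->; set hk := iter k (step S (sfP P)) h1.
  have rk : reachable S hk := reach_iter k r1 (sfP_valid P).
  have Uk : U hk := IH hk rk (leq_trans lt (htotal_iter _ _ k)).
  apply/ffunP=> i; rewrite !stepS_E; case: ifP => // /negbT ne.
  by case: (hs i) => e; rewrite e // Uk.
have stp : stopped S (iter N0 (step S (sfP P)) h1).
  apply: (iter_stopped (sfP_valid P) r1).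
  by rewrite -{1}(addn0 N0) ltn_add2l (leq_ltn_trans (leq0n _) lt).
have E : run S sig h = run S (sfP P) h1.
  by rewrite /run iterSr -/h1 A -add1n iter_stop_more.
have FC : consistentP [ffun i => modif (P i) (h1 i)] (run S (sfP P) h1).
  apply/forallP=> j; rewrite ffunE /run; apply: (cons_iter (P := P j)) => //.
  - exact: sfP_valid.
  - by apply: modif_cons; case: (reach_Inv r1 j).
  - by move=> o o' a1 a2; rewrite modif_out.
rewrite /outcome E.
have := FH seqz (reach_iter N0.+1 r1 (sfP_valid P)) (run_stopped (sfP_valid P) r1) FC a.
by move=> ->.
Qed.

Lemma R1 h : reachable S h ->
  (forall h', reachable S h' -> htotal h < htotal h' -> U h') ->
  forall b, S h b != set0 -> Sig b NN (h b) (S h b) = nul.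
Proof.
move=> r IH b ne.
have I := reach_Inv r.
have nst : ~~ stopped S h by apply/forallPn; exists b.
pose P : profile := [ffun => NN].
have PE : forall i, P i = NN by move=> i; rewrite ffunE.
set sig := fun i => Sig i (P i).
have vsig : validS sig by move=> i; exact: vSig.
have hsig : forall i, (forall h0 Om, sig i h0 Om = Sig i (P i) h0 Om) \/
             (forall h0 Om, sig i h0 Om = straightforward (P i) h0 Om) by move=> i; left.
set h1 := step S sig h.
pose T : profile := [ffun i => modif (P i) (h1 i)].
have oT : forall a, outcome S sig h a = phi T a := CONT r IH nst vsig hsig.
have r1 : reachable S h1 := reach_step r vsig.
have TC : consistentP T h.
  apply: (@consistentP_step n m phi _ (fun i => sig i (h i) (S h i)) h).
  by apply/forallP=> i; rewrite ffunE; apply: modif_cons; case: (reach_Inv r1 i).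
have Tn : forall j, S h j != set0 -> phi T j = nul.
  move=> j jne.
  set dev := fun b0 => if b0 == j then straightforward NN else sig b0.
  have vdev : validS dev by move=> i; rewrite /dev; case: ifP => _; [exact: sf_valid | exact: vsig].
  have hdev : forall i, (forall h0 Om, dev i h0 Om = Sig i (P i) h0 Om) \/
             (forall h0 Om, dev i h0 Om = straightforward (P i) h0 Om).
    by move=> i; rewrite /dev; case: ifP => [/eqP->|_]; [right; rewrite PE | left].
  have pe : wprefers (P j) (outcome S sig h j) (outcome S dev h j).
    exact: (@eqS j h r (straightforward NN) (sf_valid NN) P).
  rewrite oT (CONT r IH nst vdev hdev) PE in pe.
  set T' : profile := [ffun i => modif (P i) (step S dev h i)] in pe.
  have dj : dev j (h j) (S h j) = nul.
    rewrite /dev eqxx; apply: sf_eq; first exact: null_in_menu.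
    by move=> o _; exact: Nnull_best.
  have rd : reachable S (step S dev h) := reach_step r vdev.
  have T'C : consistentP T' h.
    apply: (@consistentP_step n m phi _ (fun i => dev i (h i) (S h i)) h).
    by apply/forallP=> i; rewrite ffunE; apply: modif_cons; case: (reach_Inv rd i).
  have mu : phi T' j \in S h j by case: (menuE jne) => -> _ _; exact: muH_phi.
  have : phi T' j = nul.
    have := IR T' j; rewrite ffunE PE stepS_E (negbTE jne) dj => /modif_null [|//].
    rewrite chain_rcons mem_rcons in_cons => /orP[/eqP//|oc].
    by move: (menu_disj I jne mu); rewrite oc.
  by move=> e; rewrite e Nnull_top in pe; apply/eqP.
pose c' := fun i => if i == b then sig b (h b) (S h b) else nul.
pose G : profile := [ffun i => modif (P i) (step_choice S c' h i)].
have cv' : forall i, S h i != set0 -> c' i \in S h i.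
  move=> i ine; rewrite /c'; case: eqP => [->|_]; first exact: vsig.
  exact: null_in_menu.
have I' := Inv_step I cv'.
have GC : consistentP G h.
  apply: (@consistentP_step n m phi _ c' h).
  by apply/forallP=> i; rewrite ffunE; apply: modif_cons; case: (I' i).
have GT : phi G = phi T.
  pose Ts (s : seq 'I_n) : profile := [ffun i => if i \in s then G i else T i].
  suff: forall s, phi (Ts s) = phi T /\ consistentP (Ts s) h.
    have -> : G = Ts (enum 'I_n) by apply/ffunP=> i; rewrite [RHS]ffunE mem_enum.
    by move=> /(_ (enum 'I_n)) [].
  elim=> [|j s [IHe IHc]].
    by have -> : Ts [::] = T by apply/ffunP=> i; rewrite ffunE.
  case: (boolP (j \in s)) => js.
    have -> : Ts (j :: s) = Ts s.
      by apply/ffunP=> i; rewrite !ffunE in_cons; case: (eqVneq i j) => [->|]; rewrite ?js.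
    by split.
  have -> : Ts (j :: s) = upd (Ts s) j (G j).
    by apply/ffunP=> i; rewrite updE !ffunE in_cons; case: (eqVneq i j) => //= ->.
  have Xj : Ts s j = T j by rewrite ffunE (negbTE js).
  set X := Ts s in IHe IHc Xj *.
  have YC : consistentP (upd X j (G j)) h.
    apply/forallP=> i; rewrite updE; case: eqP => [->|_]; first exact: (forallP GC j).
    exact: (forallP IHc i).
  case: (boolP ((j != b) && (S h j != set0))) => [/andP[jb jne]|cond].
    have e2 : phi X j = nul by rewrite IHe; exact: Tn.
    have mu : phi (upd X j (G j)) j \in S h j.
      by case: (menuE jne) => -> _ _; exact: muH_phi.
    have e1 : phi (upd X j (G j)) j = nul.
      set Y := upd X j (G j) in mu *.
      have : wprefers (G j) (phi Y j) nul by have := IR Y j; rewrite /Y updE eqxx.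
      rewrite ffunE PE stepE (negbTE jne) /c' (negbTE jb) => /modif_null [|//].
      rewrite chain_rcons mem_rcons in_cons => /orP[/eqP//|oc].
      by move: (menu_disj I jne mu); rewrite oc.
    by rewrite (RM2 RM e1 e2) IHe.
  have GjT : G j = T j.
    rewrite !ffunE; case: ifP => // /negbT jne.
    move: cond; rewrite jne andbT negbK => /eqP ->.
    by rewrite /c' eqxx.
  by rewrite GjT -Xj upd_self.
have := KA IR RM SP MD seqz r ne (cv' b ne) (fun j _ => PE j) (fun j jb _ => ifN_eq _ _ jb).
rewrite GT Tn // /c' eqxx /sig PE => <-.
by [].
Qed.

Lemma Uall h : reachable S h -> U h.
Proof.
move: h; apply: reach_ind => h r IH i p ne.
have nst : ~~ stopped S h by apply/forallPn; exists i.
pose P : profile := [ffun j => if j == i then p else NN].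
have Pi : P i = p by rewrite ffunE eqxx.
have PN : forall j, j != i -> P j = NN by move=> j ji; rewrite ffunE (negbTE ji).
set sig := fun b => Sig b (P b).
set dev := fun b => if b == i then straightforward p else sig b.
have vsig : validS sig by move=> j; exact: vSig.
have vdev : validS dev by move=> j; rewrite /dev; case: ifP => _; [exact: sf_valid | exact: vsig].
have hsig : forall j, (forall h0 Om, sig j h0 Om = Sig j (P j) h0 Om) \/
             (forall h0 Om, sig j h0 Om = straightforward (P j) h0 Om) by move=> j; left.
have hdev : forall j, (forall h0 Om, dev j h0 Om = Sig j (P j) h0 Om) \/
             (forall h0 Om, dev j h0 Om = straightforward (P j) h0 Om).
  by move=> j; rewrite /dev; case: ifP => [/eqP->|_]; [right; rewrite Pi | left].
have pe : wprefers (P i) (outcome S sig h i) (outcome S dev h i).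
  exact: (@eqS i h r (straightforward p) (sf_valid p) P).
rewrite (CONT r IH nst vsig hsig) (CONT r IH nst vdev hdev) Pi in pe.
have R1' := R1 r IH.
have ex : phi [ffun j => modif (P j) (step S sig h j)] i = Sig i p (h i) (S h i).
  have := KA IR RM SP MD seqz (c := fun j => sig j (h j) (S h j)) r ne (vsig i _ _ ne) PN.
  rewrite /sig Pi; apply.
  by move=> j ji jne; rewrite PN // R1'.
have ey : phi [ffun j => modif (P j) (step S dev h j)] i = straightforward p (h i) (S h i).
  have := KA IR RM SP MD seqz (c := fun j => dev j (h j) (S h j)) r ne (vdev i _ _ ne) PN.
  rewrite /dev eqxx; apply.
  by move=> j ji jne; rewrite (negbTE ji) /sig PN // R1'.
rewrite ex ey in pe.
case: (sf_spec p (h i) ne) => yin yb.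
apply: (wpref_antisym pe); apply: yb; exact: vSig.
Qed.

End Uniq2.

Theorem prop2_main (n m : nat) (phi : rule n m) :
  individually_rational phi ->
  resource_monotonic phi ->
  strategy_proof phi ->
  monotonic_discoverability phi ->
  sequentializes (canonical_menu phi) phi ->
  perfect_expost_eq (canonical_menu phi) (fun (_ : 'I_n) (Pa : pref m) => straightforward Pa)
  /\
  (forall Sig : type_strategy n m,
     (forall a Pa, valid_strategy (Sig a Pa)) ->
     perfect_expost_eq (canonical_menu phi) Sig ->
     forall (a : 'I_n) (Pa : pref m) (hA : colhist n m),
       reachable (canonical_menu phi) hA ->
       canonical_menu phi hA a != set0 ->
       Sig a Pa (hA a) (canonical_menu phi hA a)
       = straightforward Pa (hA a) (canonical_menu phi hA a)).
Proof.
move=> IR RM SP MD seqz; split; first exact: G1.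
move=> Sig vS eqS a Pa hA r ne.
exact: (Uall IR RM SP MD seqz vS eqS r).
Qed.

Unset Implicit Arguments. Set Strict Implicit. Set Printing Implicit Defensive.

Theorem proposition2 (n m : nat) (phi : rule n m) :
  individually_rational phi ->
  resource_monotonic phi ->
  strategy_proof phi ->
  monotonic_discoverability phi ->
  sequentializes (canonical_menu phi) phi ->
  perfect_expost_eq (canonical_menu phi) (fun (_ : 'I_n) (Pa : pref m) => straightforward Pa)
  /\
  (forall Sig : type_strategy n m,
     (forall a Pa, valid_strategy (Sig a Pa)) ->
     perfect_expost_eq (canonical_menu phi) Sig ->
     forall (a : 'I_n) (Pa : pref m) (hA : colhist n m),
       reachable (canonical_menu phi) hA ->
       canonical_menu phi hA a != set0 ->
       Sig a Pa (hA a) (canonical_menu phi hA a)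
       = straightforward Pa (hA a) (canonical_menu phi hA a)).
Proof. exact: prop2_main. Qed.
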